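(* Let $(\mathfrak g,[-,-])$ be a Lie algebra and let $\mathcal B$ be a nondegenerate commutative 2-cocycle on $(\mathfrak g,[-,-])$. Then there exists a (unique) bilinear operation $\circ:\mathfrak g\otimes\mathfrak g\to\mathfrak g$ satisfying $$\mathcal B(x\circ y,z)=\mathcal B(y,[x,z]),\qquad \forall x,y,z\in\mathfrak g,$$ and $(\mathfrak g,\circ)$ is a compatible anti-pre-Lie algebra structure on $(\mathfrak g,[-,-])$, i.e. $(\mathfrak g,\circ)$ is an anti-pre-Lie algebra and $x\circ y-y\circ x=[x,y]$ for all $x,y\in\mathfrak g$.
   Context: All vector spaces are finite-dimensional over a field $\mathbb F$ of characteristic $0$. A commutative 2-cocycle on a Lie algebra $(\mathfrak g,[-,-])$ is a symmetric bilinear form $\mathcal B$ on $\mathfrak g$ such that $\mathcal B([x,y],z)+\mathcal B([y,z],x)+\mathcal B([z,x],y)=0$ for all $x,y,z$. An anti-pre-Lie algebra is a vector space $A$ with a bilinear operation $\circ$ such that, writing $[x,y]=x\circ y-y\circ x$, for all $x,y,z\in A$: (i) $x\circ(y\circ z)-y\circ(x\circ z)=[y,x]\circ z$, and (ii) $[x,y]\circ z+[y,z]\circ x+[z,x]\circ y=0$. *)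

(* Defs.v *)
From HB Require Import structures.
From mathcomp Require Import all_boot all_order all_algebra.
Set Implicit Arguments. Unset Strict Implicit. Unset Printing Implicit Defensive.
Import GRing.Theory.
Local Open Scope ring_scope.

Definition bilinear_map (F : fieldType) (V W : lmodType F) (m : V -> V -> W) :=
  (forall z, linear (m ^~ z)) /\ (forall x, linear (m x)).

Definition is_lie_bracket (F : fieldType) (V : lmodType F) (br : V -> V -> V) :=
  [/\ bilinear_map br,
      (forall x, br x x = 0) &
      (forall x y z, br x (br y z) + br y (br z x) + br z (br x y) = 0)].

Definition comm_2cocycle (F : fieldType) (V : lmodType F) (br : V -> V -> V)
  (B : V -> V -> F^o) :=
  [/\ bilinear_map B,
      (forall x y, B x y = B y x) &
      (forall x y z, B (br x y) z + B (br y z) x + B (br z x) y = 0)].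

Definition nondegenerate_form (F : fieldType) (V : lmodType F) (B : V -> V -> F^o) :=
  forall x, (forall y, B x y = 0) -> x = 0.

Definition anti_pre_lie (F : fieldType) (V : lmodType F) (op : V -> V -> V) :=
  let com := fun x y => op x y - op y x in
  (forall x y z, op x (op y z) - op y (op x z) = op (com y x) z) /\
  (forall x y z, op (com x y) z + op (com y z) x + op (com z x) y = 0).

(* Main.v *)
Require Import Defs.
From HB Require Import structures.
From mathcomp Require Import all_boot all_order all_algebra.
From mathcomp Require Import ring.
From Stdlib Require Import ClassicalEpsilon.
Import GRing.Theory.
Local Open Scope ring_scope.


Lemma mklin (F : fieldType) (U W : lmodType F) (f : U -> W) (lf : linear f) :
  {g : {linear U -> W} | forall x, g x = f x}.
Proof. pose g : {linear U -> W} := HB.pack f (GRing.isLinear.Build _ _ _ _ f lf). by exists g. Qed.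

Lemma represent (F : fieldType) (V : vectType F) (B : V -> V -> F^o) :
  bilinear_map B -> nondegenerate_form B ->
  forall f : V -> F^o, linear f -> exists v, forall z, B v z = f z.
Proof.
move=> [B1 B2] nd f lf.
pose Bl v : 'Hom(V, F^o) := linfun (sval (@mklin _ _ _ _ (B2 v))).
have BlE v z : Bl v z = B v z by rewrite /Bl lfunE; case: (@mklin _ _ _ _ _).
have linBl : linear Bl.
  move=> a u v; apply/lfunP => z; rewrite add_lfunE scale_lfunE !BlE.
  exact: B1.
pose Phi := linfun (sval (@mklin _ _ _ _ linBl)).
have PhiE v : Phi v = Bl v by rewrite /Phi lfunE; case: (@mklin _ _ _ _ _).
have ker0 : lker Phi == 0%VS.
  apply/lker0P => u v Huv; apply/eqP; rewrite -subr_eq0; apply/eqP; apply: nd => y.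
  have h := B1 y (-1) v u. rewrite /= scaleN1r in h. rewrite addrC h.
  by rewrite -!BlE -!PhiE Huv scaleN1r addNr.
have fullimg : limg Phi = fullv.
  apply/eqP; rewrite eqEdim subvf /=.
  rewrite limg_dim_eq; last by rewrite (eqP ker0) capv0.
  rewrite !dimvf; rewrite /dim /= muln1 //.
have : linfun (sval (@mklin _ _ _ _ lf)) \in limg Phi by rewrite fullimg memvf.
case/memv_imgP => v _ Hv; exists v => z.
by rewrite -BlE -PhiE -Hv lfunE; case: (@mklin _ _ _ _ _).
Qed.

Section Lin.
Variables (F : fieldType) (U W : lmodType F) (f : U -> W).
Hypothesis lf : linear f.
Lemma linD u v : f (u + v) = f u + f v.
Proof. by have [g hg] := @mklin _ _ _ _ lf; rewrite -!hg linearD. Qed.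
Lemma linN u : f (- u) = - f u.
Proof. by have [g hg] := @mklin _ _ _ _ lf; rewrite -!hg linearN. Qed.
Lemma linZ a u : f (a *: u) = a *: f u.
Proof. by have [g hg] := @mklin _ _ _ _ lf; rewrite -!hg linearZ. Qed.
Lemma lin0 : f 0 = 0.
Proof. by have [g hg] := @mklin _ _ _ _ lf; rewrite -!hg linear0. Qed.
End Lin.
Arguments linD {F U W f}.
Arguments linN {F U W f}.
Arguments linZ {F U W f}.
Arguments lin0 {F U W f}.

Ltac lhs H := match type of H with ?e = _ => e end.

Theorem theorem2p19 (F : fieldType) (V : vectType F)
  (br : V -> V -> V) (B : V -> V -> F^o) :
  [pchar F] =i pred0 ->
  is_lie_bracket br ->
  comm_2cocycle br B ->
  nondegenerate_form B ->
  exists op : V -> V -> V,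
    [/\ bilinear_map op,
        (forall x y z, B (op x y) z = B y (br x z)),
        (forall op' : V -> V -> V, bilinear_map op' ->
           (forall x y z, B (op' x y) z = B y (br x z)) ->
           forall x y, op' x y = op x y),
        anti_pre_lie op &
        (forall x y, op x y - op y x = br x y)].
Proof.
move=> ch0 [[br1 br2] bralt jac] [[B1 B2] Bsym coc] nd.
have brD1 u v w : br (u + v) w = br u w + br v w := linD (br1 w) u v.
have brD2 u v w : br w (u + v) = br w u + br w v := linD (br2 w) u v.
have brN1 u w : br (- u) w = - br u w := linN (br1 w) u.
have brN2 u w : br w (- u) = - br w u := linN (br2 w) u.
have brZ1 a u w : br (a *: u) w = a *: br u w := linZ (br1 w) a u.
have brZ2 a u w : br w (a *: u) = a *: br w u := linZ (br2 w) a u.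
have BD1 u v w : B (u + v) w = B u w + B v w := linD (B1 w) u v.
have BD2 u v w : B w (u + v) = B w u + B w v := linD (B2 w) u v.
have BN1 u w : B (- u) w = - B u w := linN (B1 w) u.
have BN2 u w : B w (- u) = - B w u := linN (B2 w) u.
have BZ1 a u w : B (a *: u) w = a *: B u w := linZ (B1 w) a u.
have BZ2 a u w : B w (a *: u) = a *: B w u := linZ (B2 w) a u.
have B02 w : B w 0 = 0 := lin0 (B2 w).
have B01 w : B 0 w = 0 := lin0 (B1 w).
have brA u v : br u v = - br v u.
  have := bralt (u + v); rewrite brD1 !brD2 !bralt add0r addr0 => /eqP.
  by rewrite addr_eq0 => /eqP.
have eqB u v : (forall z, B u z = B v z) -> u = v.
  move=> h; apply/eqP; rewrite -subr_eq0; apply/eqP; apply: nd => z.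
  by rewrite BD1 BN1 h subrr.
have ex x y : exists v, forall z, B v z = B y (br x z).
  apply: represent => //.
  by move=> a u v; rewrite /= brD2 brZ2 BD2 BZ2.
pose op x y := proj1_sig (constructive_indefinite_description _ (ex x y)).
have opP x y z : B (op x y) z = B y (br x z).
  by rewrite /op; case: constructive_indefinite_description.
have comm x y : op x y - op y x = br x y.
  apply: eqB => z; rewrite BD1 BN1 !opP.
  have := coc x y z; rewrite (Bsym (br y z)) (brA z x) BN1 (Bsym (br x z)).
  move=> h; apply/eqP; rewrite -subr_eq0; apply/eqP; rewrite -oppr0 -h. ring.
exists op; split => //.
- split => [z a u v | x a u v]; apply: eqB => w.
    by rewrite BD1 BZ1 !opP brD1 brZ1 BD2 BZ2.
  by rewrite BD1 BZ1 !opP BD1 BZ1.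
- by move=> op' _ h x y; apply: eqB => z; rewrite h opP.
- split => x y z /=; rewrite !comm.
    apply: eqB => w; rewrite BD1 BN1 !opP.
    rewrite -BN2 -BD2; congr (B z _).
    have := jac y x w; move/eqP; rewrite addr_eq0 => /eqP.
    rewrite (brA (br y x) w) => <-.
    by rewrite (brA w y) brN2.
  apply: eqB => w; rewrite !BD1 !opP B01.
  have c1 := coc x y (br z w); have c2 := coc x z (br y w).
  have c3 := coc x w (br y z); have c4 := coc y z (br x w).
  have c5 := coc y w (br x z); have c6 := coc z w (br x y).
  have jw := congr1 (B w) (jac x y z); have jz := congr1 (B z) (jac x y w).
  have jy := congr1 (B y) (jac x z w); have jx := congr1 (B x) (jac y z w).
  rewrite !B02 in jw jz jy jx.
  move: c1 c2 c3 c4 c5 c6 jw jz jy jx.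
  rewrite ?(BD1, BD2, BN1, BN2, brD1, brD2, brN1, brN2).
  rewrite ?(brA (br _ _)).
  rewrite ?(brA y x) ?(brA z x) ?(brA w x) ?(brA z y) ?(brA w y) ?(brA w z).
  rewrite ?(BN1, BN2, brN1, brN2, opprK).
  rewrite ?(Bsym (br _ (br _ _))).
  rewrite ?(Bsym (br y _) (br x _)) ?(Bsym (br z _) (br x _)) ?(Bsym (br w _) (br x _)).
  rewrite ?(BN1, BN2, opprK).
  move=> c1 c2 c3 c4 c5 c6 jw jz jy jx.
  match goal with |- ?T = 0 =>
    let e1 := lhs c1 in let e2 := lhs c2 in let e3 := lhs c3 in
    let e4 := lhs c4 in let e5 := lhs c5 in let e6 := lhs c6 in
    let fw := lhs jw in let fz := lhs jz in let fy := lhs jy in let fx := lhs jx in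
    have E : 2 * T = e1 - fw - fz - e2 + fy - e3 + e4 - fx + e5 - e6 by ring
  end.
  rewrite c1 c2 c3 c4 c5 c6 jw jz jy jx in E.
  have two : (2 : F) != 0 by rewrite (pcharf0P _).1.
  apply/eqP; rewrite -(mulrI_eq0 _ (lregP two)); apply/eqP.
  by rewrite E; ring.
Qed.
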